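(* Let $x^1,\dots,x^{\ell_1},\hat x^1,\dots,\hat x^{\ell_2}\in\mathbb{R}^n$ with $\ell_1\ge1$, let $\mathcal{P}=\{\sum_{i=1}^{\ell_1}\theta_ix^i+\sum_{j=1}^{\ell_2}\hat\theta_j\hat x^j:\theta_i\ge0,\ \sum_i\theta_i=1,\ \hat\theta_j\ge0\}$, let $X=[x^1,\dots,x^{\ell_1},\hat x^1,\dots,\hat x^{\ell_2}]\in\mathbb{R}^{n\times(\ell_1+\ell_2)}$, and let $A\in\mathbb{R}^{n\times n}$. Then $\mathcal{P}$ is an invariant set for the continuous system $\dot x(t)=Ax(t)$ if and only if there exists a matrix $\tilde L\in\mathbb{R}^{(\ell_1+\ell_2)\times(\ell_1+\ell_2)}$ whose off-diagonal entries are all nonnegative such that $X\tilde L=AX$ and $\bar 1\tilde L=0$, where $\bar 1=(1,\dots,1,0,\dots,0)$ is the row vector with $\ell_1$ ones followed by $\ell_2$ zeros (i.e., in every column of $\tilde L$ the first $\ell_1$ entries sum to zero).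
   Context: A set $\mathcal{S}\subseteq\mathbb{R}^n$ is an invariant set for the continuous system $\dot x=Ax$ if $x(0)\in\mathcal{S}$ implies $x(t)\in\mathcal{S}$ for all $t\ge 0$; equivalently $e^{At}\mathcal{S}\subseteq\mathcal{S}$ for all $t\ge0$. *)

(* Defs.v *)
From Stdlib Require Import Reals Lra.
Open Scope R_scope.

(* Vectors in R^n are functions nat -> R, only indices < n matter;
   matrices are functions nat -> nat -> R (row, column). *)

Fixpoint rsum (n : nat) (f : nat -> R) : R :=
  match n with
  | O => 0
  | S k => rsum k f + f k
  end.

Definition mat_vec (n : nat) (A : nat -> nat -> R) (y : nat -> R) (i : nat) : R :=
  rsum n (fun j => A i j * y j).

Definition is_solution (n : nat) (A : nat -> nat -> R) (x : R -> nat -> R) : Prop :=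
  forall (t : R) (i : nat), (i < n)%nat ->
    derivable_pt_lim (fun s => x s i) t (mat_vec n A (x t) i).

Definition invariant_cont (n : nat) (A : nat -> nat -> R) (S : (nat -> R) -> Prop) : Prop :=
  forall x : R -> nat -> R, is_solution n A x ->
    S (x 0) -> forall t : R, 0 <= t -> S (x t).

(* The polyhedron P generated by vertices xs 0..l1-1 (convex part) and
   rays xh 0..l2-1 (conic part).  xs i k = k-th coordinate of x^(i+1). *)
Definition polyP (n l1 l2 : nat) (xs xh : nat -> nat -> R) (y : nat -> R) : Prop :=
  exists theta thetah : nat -> R,
    (forall i, (i < l1)%nat -> 0 <= theta i) /\
    rsum l1 theta = 1 /\
    (forall j, (j < l2)%nat -> 0 <= thetah j) /\
    (forall k, (k < n)%nat ->
       y k = rsum l1 (fun i => theta i * xs i k) + rsum l2 (fun j => thetah j * xh j k)).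

Definition Xmat (l1 : nat) (xs xh : nat -> nat -> R) (k p : nat) : R :=
  if Nat.ltb p l1 then xs p k else xh (p - l1)%nat k.

(* Main.v *)
Require Import Defs.
From Stdlib Require Import Reals Lra Lia Classical.
From Coquelicot Require Import Coquelicot.
Open Scope R_scope.

Lemma rsum_ext n f g : (forall i, (i < n)%nat -> f i = g i) -> rsum n f = rsum n g.
Proof. induction n; simpl; intros H; auto. rewrite IHn by (intros; apply H; lia). rewrite H by lia. auto. Qed.

Lemma rsum_plus n f g : rsum n (fun i => f i + g i) = rsum n f + rsum n g.
Proof. induction n; simpl; [lra|]. rewrite IHn; lra. Qed.

Lemma rsum_scal n c f : rsum n (fun i => c * f i) = c * rsum n f.
Proof. induction n; simpl; [lra|]. rewrite IHn; lra. Qed.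

Lemma rsum_opp n f : rsum n (fun i => - f i) = - rsum n f.
Proof. induction n; simpl; [lra|]. rewrite IHn; lra. Qed.

Lemma rsum_zero n f : (forall i, (i < n)%nat -> f i = 0) -> rsum n f = 0.
Proof. intros H. rewrite (rsum_ext n f (fun _ => 0)) by auto. induction n; simpl; auto; rewrite IHn; try lra. intros; apply H; lia. Qed.

Lemma rsum_swap n m f : rsum n (fun i => rsum m (fun j => f i j)) = rsum m (fun j => rsum n (fun i => f i j)).
Proof. induction n; simpl. symmetry; apply rsum_zero; auto. rewrite IHn, <- rsum_plus. auto. Qed.

Lemma rsum_le n f g : (forall i, (i < n)%nat -> f i <= g i) -> rsum n f <= rsum n g.
Proof. induction n; simpl; intros H; [lra|]. assert (f n <= g n) by (apply H; lia). assert (rsum n f <= rsum n g) by (apply IHn; intros; apply H; lia). lra. Qed.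

Lemma rsum_nonneg n f : (forall i, (i < n)%nat -> 0 <= f i) -> 0 <= rsum n f.
Proof. intros H. replace 0 with (rsum n (fun _ => 0)). apply rsum_le; auto. apply rsum_zero; auto. Qed.

Lemma rsum_abs n f : Rabs (rsum n f) <= rsum n (fun i => Rabs (f i)).
Proof. induction n; simpl. rewrite Rabs_R0; lra. eapply Rle_trans. apply Rabs_triang. lra. Qed.

Lemma rsum_term n f k : (forall i, (i < n)%nat -> 0 <= f i) -> (k < n)%nat -> f k <= rsum n f.
Proof. induction n; simpl; intros H Hk; [lia|]. assert (0 <= rsum n f) by (apply rsum_nonneg; intros; apply H; lia).
 destruct (Nat.eq_dec k n). subst. lra. assert (f k <= rsum n f) by (apply IHn; try lia; intros; apply H; lia). assert (0 <= f n) by (apply H; lia). lra. Qed.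

Definition delta (p q : nat) : R := if Nat.eqb p q then 1 else 0.

Lemma rsum_delta n y k : (k < n)%nat -> rsum n (fun q => delta k q * y q) = y k.
Proof. induction n; simpl; intros Hk; [lia|]. unfold delta at 2. destruct (Nat.eqb_spec k n).
 subst. rewrite rsum_zero. lra. intros i Hi. unfold delta. destruct (Nat.eqb_spec n i); [lia|lra].
 rewrite IHn by lia. lra. Qed.

Lemma derive_rsum n (f : nat -> R -> R) d t : (forall q, (q < n)%nat -> derivable_pt_lim (f q) t (d q)) ->
  derivable_pt_lim (fun s => rsum n (fun q => f q s)) t (rsum n d).
Proof. induction n; simpl; intros H. apply derivable_pt_lim_const.
 apply (derivable_pt_lim_plus (fun s => rsum n (fun q => f q s)) (f n)). apply IHn; intros; apply H; lia. apply H; lia. Qed.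

Fixpoint mpow (m : nat) (B : nat -> nat -> R) (k : nat) : nat -> nat -> R :=
  match k with
  | O => delta
  | S k => fun p q => rsum m (fun r => B p r * mpow m B k r q)
  end.

Definition coef m B p q (k : nat) : R := mpow m B k p q / INR (Factorial.fact k).
Definition Eexp m B (t : R) p q : R := PSeries (coef m B p q) t.

Definition bnd m (B : nat -> nat -> R) := rsum m (fun p => rsum m (fun r => Rabs (B p r))).

Lemma bnd_ge0 m B : 0 <= bnd m B.
Proof. apply rsum_nonneg; intros; apply rsum_nonneg; intros; apply Rabs_pos. Qed.

Lemma mpow_bound m B k p q : (p < m)%nat -> Rabs (mpow m B k p q) <= bnd m B ^ k.
Proof. revert p q; induction k; intros p q Hp; simpl.
 unfold delta; destruct (Nat.eqb p q); rewrite ?Rabs_R1, ?Rabs_R0; lra.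
 eapply Rle_trans. apply rsum_abs.
 eapply Rle_trans. apply (rsum_le _ _ (fun r => Rabs (B p r) * bnd m B ^ k)).
 intros i Hi. rewrite Rabs_mult. apply Rmult_le_compat_l. apply Rabs_pos. apply IHk; auto.
 rewrite (rsum_ext _ _ (fun r => bnd m B ^ k * Rabs (B p r))) by (intros; lra).
 rewrite rsum_scal. rewrite Rmult_comm. apply Rmult_le_compat_r. apply pow_le, bnd_ge0.
 apply (rsum_term m (fun p => rsum m (fun r => Rabs (B p r)))); auto. intros; apply rsum_nonneg; intros; apply Rabs_pos.
Qed.

Lemma ex_series_exp y : ex_series (fun n => y ^ n / INR (Factorial.fact n)).
Proof. exists (exp y).
 eapply is_series_ext; [|apply (is_exp_Reals y)]. intros n. simpl. rewrite pow_n_pow. unfold scal; simpl; unfold mult; simpl. unfold Rdiv; ring. Qed.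


Lemma INR_fact_pos n : 0 < INR (Factorial.fact n).
Proof. apply lt_0_INR, Factorial.lt_O_fact. Qed.

Lemma coef_disk m B p q r : (p < m)%nat -> CV_disk (coef m B p q) r.
Proof. intros Hp. unfold CV_disk.
 apply (@ex_series_le R_AbsRing R_CompleteNormedModule _ (fun n => (bnd m B * Rabs r) ^ n / INR (Factorial.fact n))).
 2: apply ex_series_exp.
 intros n. change (norm (Rabs (coef m B p q n * r ^ n))) with (Rabs (Rabs (coef m B p q n * r ^ n))).
 rewrite Rabs_Rabsolu. unfold coef. rewrite Rabs_mult, Rpow_mult_distr, <- RPow_abs.
 unfold Rdiv. rewrite Rabs_mult, Rabs_inv. rewrite (Rabs_right (INR _)) by (left; apply INR_fact_pos).
 pose proof (mpow_bound m B n p q Hp). pose proof (INR_fact_pos n).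
 assert (0 <= Rabs r ^ n) by (apply pow_le, Rabs_pos).
 assert (0 < / INR (Factorial.fact n)) by (apply Rinv_0_lt_compat; auto).
 assert (0 <= Rabs (mpow m B n p q)) by apply Rabs_pos.
 replace (bnd m B ^ n * Rabs r ^ n * / INR (Factorial.fact n)) with (bnd m B ^ n * / INR (Factorial.fact n) * Rabs r ^ n) by ring.
 apply Rmult_le_compat_r; auto. apply Rmult_le_compat_r; lra.
Qed.

Lemma coef_radius m B p q x : (p < m)%nat -> Rbar_lt (Rabs x) (CV_radius (coef m B p q)).
Proof. intros Hp. destruct (Lub_Rbar_correct (CV_disk (coef m B p q))) as [Hub _].
 specialize (Hub (Rabs x + 1) (coef_disk m B p q _ Hp)). unfold CV_radius.
 destruct (Lub_Rbar (CV_disk (coef m B p q))); simpl in *; auto. lra. Qed.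

Lemma coef_ex m B p q x : (p < m)%nat -> ex_pseries (coef m B p q) x.
Proof. intros; apply CV_disk_correct, coef_disk; auto. Qed.

Lemma PSeries_rsum n (c : nat -> R) (a : nat -> nat -> R) x :
  (forall r, (r < n)%nat -> ex_pseries (a r) x) ->
  PSeries (fun k => rsum n (fun r => c r * a r k)) x = rsum n (fun r => c r * PSeries (a r) x)
  /\ ex_pseries (fun k => rsum n (fun r => c r * a r k)) x.
Proof. induction n; simpl; intros H.
 split. rewrite PSeries_const_0; lra.
 assert (E : ex_pseries (PS_scal 0 (fun n => / INR (Factorial.fact n))) x).
 apply ex_pseries_scal. apply Rmult_comm. eexists; apply is_exp_Reals.
 eapply ex_series_ext; [|apply E]. intros k. unfold PS_scal. simpl. f_equal. change (mult 0 (/ INR (Factorial.fact k))) with (0 * / INR (Factorial.fact k)). apply Rmult_0_l.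
 destruct IHn as [IH1 IH2]. intros; apply H; lia.
 assert (Ex : ex_pseries (PS_scal (c n) (a n)) x). apply ex_pseries_scal. apply Rmult_comm. apply H; lia.
 split.
 rewrite (PSeries_ext _ (PS_plus (fun k => rsum n (fun r => c r * a r k)) (PS_scal (c n) (a n)))) by (intros; reflexivity).
 rewrite PSeries_plus by auto. rewrite IH1, PSeries_scal. auto.
 eapply ex_series_ext; [|apply (ex_pseries_plus _ _ _ IH2 Ex)]. intros k; reflexivity.
Qed.


Lemma PS_derive_coef m B p q k :
  PS_derive (coef m B p q) k = rsum m (fun r => B p r * coef m B r q k).
Proof. unfold PS_derive, coef. simpl mpow.
 change (Factorial.fact (S k)) with (S k * Factorial.fact k)%nat. rewrite mult_INR.
 rewrite (rsum_ext m (fun r => B p r * (mpow m B k r q / INR (Factorial.fact k))) (fun r => / INR (Factorial.fact k) * (B p r * mpow m B k r q))) by (intros; unfold Rdiv; ring).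
 rewrite rsum_scal. pose proof (INR_fact_pos k). assert (0 < INR (S k)) by (apply lt_0_INR; lia).
 field. lra. Qed.

Lemma Eexp_derive m B t p q : (p < m)%nat ->
  derivable_pt_lim (fun s => Eexp m B s p q) t (rsum m (fun r => B p r * Eexp m B t r q)).
Proof. intros Hp. apply is_derive_Reals. unfold Eexp.
 assert (H := is_derive_PSeries (coef m B p q) t (coef_radius m B p q t Hp)).
 rewrite (PSeries_ext _ (fun k => rsum m (fun r => B p r * coef m B r q k))) in H by apply PS_derive_coef.
 rewrite (proj1 (PSeries_rsum m (fun r => B p r) (fun r => coef m B r q) t (fun r Hr => coef_ex m B r q t Hr))) in H. auto. Qed.

Lemma Eexp_0 m B p q : Eexp m B 0 p q = delta p q.
Proof. unfold Eexp. rewrite PSeries_0. unfold coef. simpl. lra. Qed.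

Lemma Eexp_nonneg m B t p q : (forall i j, (i < m)%nat -> (j < m)%nat -> 0 <= B i j) ->
  (p < m)%nat -> 0 <= t -> 0 <= Eexp m B t p q.
Proof. intros HB Hp Ht.
 assert (Hm : forall k p, (p < m)%nat -> 0 <= mpow m B k p q).
 { induction k; intros p0 Hp0; simpl. unfold delta; destruct (Nat.eqb p0 q); lra.
   apply rsum_nonneg; intros. apply Rmult_le_pos; auto. }
 rewrite <- (PSeries_const_0 t). unfold Eexp, PSeries. apply Series_le.
 2: (eapply ex_series_ext; [|apply (coef_ex m B p q t Hp)]; intros n; rewrite pow_n_pow; change (scal (t ^ n) (coef m B p q n)) with (t ^ n * coef m B p q n); apply Rmult_comm).
 intros n. split. lra. rewrite Rmult_0_l. apply Rmult_le_pos. 2: apply pow_le; auto. unfold coef. apply Rmult_le_pos; auto.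
 left; apply Rinv_0_lt_compat, INR_fact_pos. Qed.

Definition esol m B (y : nat -> R) (t : R) (k : nat) : R := rsum m (fun q => Eexp m B t k q * y q).

Lemma esol_derive m B y t k : (k < m)%nat ->
  derivable_pt_lim (fun s => esol m B y s k) t (mat_vec m B (esol m B y t) k).
Proof. intros Hk. unfold esol, mat_vec.
 replace (rsum m (fun j => B k j * rsum m (fun q => Eexp m B t j q * y q)))
   with (rsum m (fun q => rsum m (fun r => B k r * Eexp m B t r q) * y q)).
 apply derive_rsum. intros q Hq. apply (derivable_pt_lim_scal_right (fun s => Eexp m B s k q)). apply Eexp_derive; auto.
 rewrite (rsum_ext m (fun q => _ * y q) (fun q => rsum m (fun r => B k r * Eexp m B t r q * y q))).
 rewrite rsum_swap. apply rsum_ext. intros j Hj. rewrite <- rsum_scal. apply rsum_ext; intros; ring.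
 intros q Hq. rewrite Rmult_comm, <- rsum_scal. apply rsum_ext; intros; ring. Qed.

Lemma esol_0 m B y k : (k < m)%nat -> esol m B y 0 k = y k.
Proof. intros Hk. unfold esol. rewrite (rsum_ext _ _ (fun q => delta k q * y q)). apply rsum_delta; auto.
 intros; rewrite Eexp_0; auto. Qed.


Definition dot n (w v : nat -> R) := rsum n (fun k => w k * v k).
Definition incone n m (g : nat -> nat -> R) (b : nat -> R) :=
  exists mu : nat -> R, (forall i, (i < m)%nat -> 0 <= mu i) /\
    forall k, (k < n)%nat -> b k = rsum m (fun i => mu i * g i k).

Lemma dot_lin_r n w a u c v : dot n w (fun k => a * u k - c * v k) = a * dot n w u - c * dot n w v.
Proof. unfold dot. induction n; simpl; [ring|rewrite IHn; ring]. Qed.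

Lemma dot_lin_l n w b u v : dot n (fun k => w k - b * u k) v = dot n w v - b * dot n u v.
Proof. unfold dot. induction n; simpl; [ring|rewrite IHn; ring]. Qed.

Lemma farkas n m : forall g b, ~ incone n m g b ->
  exists w, (forall i, (i < m)%nat -> dot n w (g i) <= 0) /\ dot n w b > 0.
Proof.
induction m; intros g b Hn.
- exists b. split. intros; lia.
  destruct (classic (exists k, (k < n)%nat /\ b k <> 0)) as [[k [Hk Hb]]|Hno].
  + unfold dot. eapply Rlt_le_trans; [|apply (rsum_term n (fun k => b k * b k) k)]; auto.
    assert (b k * b k > 0). { destruct (Rlt_or_le (b k) 0); [nra|]. assert (b k > 0) by lra. nra. } lra.
    intros; nra.
  + exfalso. apply Hn. exists (fun _ => 0). split. intros; lra. intros k Hk. simpl.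
    destruct (Req_dec (b k) 0); auto. exfalso; apply Hno; eauto.
- assert (Hn' : ~ incone n m g b).
  { intros [mu [Hmu Hb]]. apply Hn. exists (fun i => if Nat.ltb i m then mu i else 0). split.
    intros i Hi. destruct (Nat.ltb_spec i m); auto; lra.
    intros k Hk. simpl. rewrite Nat.ltb_irrefl, Hb by auto. rewrite Rmult_0_l, Rplus_0_r.
    apply rsum_ext. intros i Hi. destruct (Nat.ltb_spec i m); auto; lia. }
  destruct (IHm g b Hn') as [w [Hw1 Hw2]].
  destruct (Rle_or_lt (dot n w (g m)) 0) as [Hle|Hgt].
  + exists w. split; auto. intros i Hi. destruct (Nat.eq_dec i m). subst; auto. apply Hw1; lia.
  + set (al := dot n w (g m)). assert (Hal : al <> 0) by (unfold al; lra). assert (Hal' : 0 < al) by (unfold al; lra).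
    set (g' := fun i k => al * g i k - dot n w (g i) * g m k).
    set (b' := fun k => al * b k - dot n w b * g m k).
    assert (Hn2 : ~ incone n m g' b').
    { intros [mu [Hmu Hb]]. apply Hn.
      set (c := (dot n w b - rsum m (fun i => mu i * dot n w (g i))) / al).
      exists (fun i => if Nat.ltb i m then mu i else c). split.
      - intros i Hi. destruct (Nat.ltb_spec i m); auto. unfold c.
        apply Rmult_le_pos; [|left; apply Rinv_0_lt_compat; auto].
        assert (rsum m (fun i => mu i * dot n w (g i)) <= 0).
        { replace 0 with (rsum m (fun _ => 0)) by (apply rsum_zero; auto). apply rsum_le. intros j Hj.
          specialize (Hmu j Hj). specialize (Hw1 j Hj). nra. }
        lra.
      - intros k Hk. simpl. rewrite Nat.ltb_irrefl.
        rewrite (rsum_ext m (fun i => (if Nat.ltb i m then mu i else c) * g i k) (fun i => mu i * g i k))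
          by (intros i Hi; destruct (Nat.ltb_spec i m); auto; lia).
        specialize (Hb k Hk). unfold b', g' in Hb.
        rewrite (rsum_ext m _ (fun i => al * (mu i * g i k) + - (g m k * (mu i * dot n w (g i))))) in Hb by (intros; ring).
        rewrite rsum_plus, rsum_opp, !rsum_scal in Hb.
        unfold c. set (S1 := rsum m (fun i => mu i * g i k)) in *. set (T1 := rsum m (fun i : nat => mu i * dot n w (g i))) in *.
        apply (Rmult_eq_reg_l al); [|auto]. replace (al * b k) with (al * S1 + - (g m k * T1) + dot n w b * g m k) by lra.
        field. auto. }
    destruct (IHm g' b' Hn2) as [w' [Hw'1 Hw'2]].
    set (be := dot n w' (g m) / al).
    exists (fun k => w' k - be * w k). split.
    * intros i Hi. rewrite dot_lin_l. destruct (Nat.eq_dec i m).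
      -- subst. unfold be. fold al. field_simplify. lra. auto.
      -- specialize (Hw'1 i ltac:(lia)). unfold g' in Hw'1. rewrite dot_lin_r in Hw'1.
         unfold be. fold al in Hw'1 |- *.
         assert (al * (dot n w' (g i) - dot n w' (g m) / al * dot n w (g i)) <= 0).
         { replace (al * (dot n w' (g i) - dot n w' (g m) / al * dot n w (g i))) with
             (al * dot n w' (g i) - dot n w (g i) * dot n w' (g m)) by (field; auto). auto. }
         destruct (Rle_or_lt (dot n w' (g i) - dot n w' (g m) / al * dot n w (g i)) 0); auto. nra.
    * rewrite dot_lin_l. unfold b' in Hw'2. rewrite dot_lin_r in Hw'2. unfold be. fold al in Hw'2 |- *.
      assert (al * (dot n w' b - dot n w' (g m) / al * dot n w b) > 0).
      { replace (al * (dot n w' b - dot n w' (g m) / al * dot n w b)) with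
             (al * dot n w' b - dot n w b * dot n w' (g m)) by (field; auto). auto. }
      destruct (Rle_or_lt (dot n w' b - dot n w' (g m) / al * dot n w b) 0); auto. nra.
Qed.


Lemma rsum_split a b f : rsum (a + b) f = rsum a f + rsum b (fun j => f (a + j)%nat).
Proof. induction b; simpl. rewrite Nat.add_0_r; lra. rewrite <- plus_n_Sm. simpl. rewrite IHb. lra. Qed.

Lemma dmult f g t a b : derivable_pt_lim f t a -> derivable_pt_lim g t b ->
  derivable_pt_lim (fun s => f s * g s) t (a * g t + f t * b).
Proof. intros; apply (derivable_pt_lim_mult f g); auto. Qed.

Lemma dminus f g t a b : derivable_pt_lim f t a -> derivable_pt_lim g t b ->
  derivable_pt_lim (fun s => f s - g s) t (a - b).
Proof. intros; apply (derivable_pt_lim_minus f g); auto. Qed.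

Lemma dexp c t : derivable_pt_lim (fun s => exp (c * s)) t (c * exp (c * t)).
Proof. apply is_derive_Reals. auto_derive; auto. ring. Qed.

Lemma dconst_mult c f t a : derivable_pt_lim f t a -> derivable_pt_lim (fun s => c * f s) t (c * a).
Proof. intros H. apply (derivable_pt_lim_scal f c t a H). Qed.

Lemma nonincr f f' t : (forall s, derivable_pt_lim f s (f' s)) -> (forall s, f' s <= 0) -> 0 <= t -> f t <= f 0.
Proof. intros Hd Hn Ht. destruct (Req_dec t 0). subst; lra.
 apply Rnot_lt_le. intros Hlt.
 set (eps := (f t - f 0) / (2 * t)).
 assert (Heps : 0 < eps) by (unfold eps; apply Rdiv_lt_0_compat; lra).
 assert (HH := incr_function_le (fun s => - f s + eps * s) (Finite 0) (Finite t) (fun s => - f' s + eps)).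
 assert (Hc : - f 0 + eps * 0 < - f t + eps * t).
 { apply HH; simpl; try lra. intros x _ _. apply is_derive_Reals. apply derivable_pt_lim_plus.
   apply derivable_pt_lim_opp; auto. replace eps with (eps * 1) at 2 by ring. apply dconst_mult, derivable_pt_lim_id.
   intros x _ _. specialize (Hn x). lra. }
 assert (eps * t = (f t - f 0) / 2) by (unfold eps; field; lra). rewrite Rmult_0_r in Hc. lra.
Qed.

Lemma posderiv h l : derivable_pt_lim h 0 l -> l > 0 -> exists t, 0 < t /\ h 0 < h t.
Proof. intros H Hl. destruct (H (l/2) ltac:(lra)) as [d Hd].
 assert (Hdp := cond_pos d).
 specialize (Hd (d/2) ltac:(lra) ltac:(rewrite Rabs_right; lra)).
 rewrite Rplus_0_l in Hd. exists (d/2). split. lra.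
 apply Rabs_def2 in Hd. destruct Hd as [_ Hd].
 assert (0 < (h (d/2) - h 0) / (d/2)) by lra.
 assert (0 < h (d / 2) - h 0). { apply (Rmult_lt_reg_r (/ (d/2))). apply Rinv_0_lt_compat; lra. rewrite Rmult_0_l. auto. }
 lra. Qed.

Lemma quad_bound n A (w : nat -> R) :
  rsum n (fun k => w k * mat_vec n A w k) <= bnd n A * rsum n (fun k => w k * w k).
Proof. unfold mat_vec. set (K := bnd n A).
 assert (Hrow : forall k, (k < n)%nat -> rsum n (fun j => Rabs (A k j)) <= K).
 { intros k Hk. apply (rsum_term n (fun p => rsum n (fun r => Rabs (A p r)))); auto. intros; apply rsum_nonneg; intros; apply Rabs_pos. }
 assert (Hcol : forall j, (j < n)%nat -> rsum n (fun k => Rabs (A k j)) <= K).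
 { intros j Hj. unfold K, bnd. apply rsum_le. intros k Hk. apply (rsum_term n (fun r => Rabs (A k r))); auto. intros; apply Rabs_pos. }
 eapply Rle_trans. apply (rsum_le _ _ (fun k => rsum n (fun j => Rabs (A k j) * (w k * w k) / 2 + Rabs (A k j) * (w j * w j) / 2))).
 { intros k Hk. rewrite <- rsum_scal. apply rsum_le. intros j Hj.
   assert (H1 : w k * (A k j * w j) <= Rabs (A k j) * (Rabs (w k) * Rabs (w j))).
   { eapply Rle_trans. apply Rle_abs. rewrite !Rabs_mult. lra. }
   assert (H2 : Rabs (w k) * Rabs (w j) <= (w k * w k + w j * w j) / 2).
   { assert (Rabs (w k) * Rabs (w k) = w k * w k) by (rewrite <- Rabs_mult; apply Rabs_right; nra).
     assert (Rabs (w j) * Rabs (w j) = w j * w j) by (rewrite <- Rabs_mult; apply Rabs_right; nra).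
     pose proof (pow2_ge_0 (Rabs (w k) - Rabs (w j))). nra. }
   eapply Rle_trans; [apply H1|]. replace (Rabs (A k j) * (w k * w k) / 2 + Rabs (A k j) * (w j * w j) / 2) with (Rabs (A k j) * ((w k * w k + w j * w j) / 2)) by field.
   apply Rmult_le_compat_l; auto. apply Rabs_pos. }
 rewrite (rsum_ext n _ (fun k => rsum n (fun j => Rabs (A k j) * (w k * w k) / 2) + rsum n (fun j => Rabs (A k j) * (w j * w j) / 2))) by (intros; apply rsum_plus).
 rewrite rsum_plus. rewrite (rsum_swap n n (fun k j => Rabs (A k j) * (w j * w j) / 2)).
 assert (E1 : rsum n (fun k => rsum n (fun j => Rabs (A k j) * (w k * w k) / 2)) <= rsum n (fun k => K * (w k * w k) / 2)).
 { apply rsum_le. intros k Hk. rewrite (rsum_ext n _ (fun j => (w k * w k / 2) * Rabs (A k j))) by (intros; field). rewrite rsum_scal.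
   specialize (Hrow k Hk). assert (0 <= w k * w k) by nra. nra. }
 assert (E2 : rsum n (fun j => rsum n (fun k => Rabs (A k j) * (w j * w j) / 2)) <= rsum n (fun k => K * (w k * w k) / 2)).
 { apply rsum_le. intros k Hk. rewrite (rsum_ext n _ (fun j => (w k * w k / 2) * Rabs (A j k))) by (intros; field). rewrite rsum_scal.
   specialize (Hcol k Hk). assert (0 <= w k * w k) by nra. nra. }
 assert (E3 : rsum n (fun k => K * (w k * w k) / 2) = K / 2 * rsum n (fun k => w k * w k)).
 { rewrite <- rsum_scal. apply rsum_ext; intros; field. }
 lra. Qed.

Lemma mat_vec_minus n A u v k : mat_vec n A (fun j => u j - v j) k = mat_vec n A u k - mat_vec n A v k.
Proof. unfold mat_vec. induction n; simpl; [ring|rewrite IHn; ring]. Qed.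

Lemma uniq_sol n A x z : is_solution n A x -> is_solution n A z ->
  (forall k, (k < n)%nat -> x 0 k = z 0 k) ->
  forall t, 0 <= t -> forall k, (k < n)%nat -> x t k = z t k.
Proof. intros Hx Hz H0 t Ht k Hk.
 set (w := fun s j => x s j - z s j).
 assert (Hw : forall s j, (j < n)%nat -> derivable_pt_lim (fun s => w s j) s (mat_vec n A (w s) j)).
 { intros s j Hj. unfold w. rewrite mat_vec_minus. apply dminus; auto. }
 set (K := bnd n A).
 set (f := fun s => rsum n (fun j => w s j * w s j)).
 set (f' := fun s => rsum n (fun j => mat_vec n A (w s) j * w s j + w s j * mat_vec n A (w s) j)).
 assert (Hf : forall s, derivable_pt_lim f s (f' s)).
 { intros s. apply (derive_rsum n (fun j s => w s j * w s j)). intros j Hj. apply dmult; auto. }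
 set (g := fun s => exp (-(2 * K) * s) * f s).
 assert (Hg : forall s, derivable_pt_lim g s ((-(2*K)) * exp (-(2*K) * s) * f s + exp (-(2*K) * s) * f' s)).
 { intros s. apply (dmult (fun s => exp (-(2*K)*s)) f). apply dexp. auto. }
 assert (Hle : g t <= g 0).
 { apply (nonincr g _ t Hg); auto. intros s.
   assert (f' s <= 2 * K * f s).
   { unfold f'. rewrite (rsum_ext _ _ (fun j => 2 * (w s j * mat_vec n A (w s) j))) by (intros; ring).
     rewrite rsum_scal. unfold f. pose proof (quad_bound n A (w s)). fold K in H. lra. }
   pose proof (exp_pos (-(2*K) * s)). nra. }
 assert (Hg0 : g 0 = 0). { unfold g, f. rewrite rsum_zero. ring. intros j Hj. unfold w. rewrite H0 by auto. ring. }
 assert (Hft : f t <= 0). { rewrite Hg0 in Hle. unfold g in Hle. pose proof (exp_pos (-(2*K) * t)). nra. }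
 assert (Hwk : w t k * w t k <= f t). { unfold f. apply (rsum_term n (fun j => w t j * w t j)); auto. intros; nra. }
 assert (w t k = 0) by nra. unfold w in H. lra.
Qed.


Definition inP n l1 l2 xs xh (y : nat -> R) :=
  exists th : nat -> R, (forall p, (p < l1 + l2)%nat -> 0 <= th p) /\ rsum l1 th = 1 /\
    forall k, (k < n)%nat -> y k = rsum (l1 + l2) (fun p => th p * Xmat l1 xs xh k p).

Lemma Xmat_lo l1 xs xh k p : (p < l1)%nat -> Xmat l1 xs xh k p = xs p k.
Proof. intros; unfold Xmat. destruct (Nat.ltb_spec p l1); auto; lia. Qed.
Lemma Xmat_hi l1 xs xh k j : Xmat l1 xs xh k (l1 + j) = xh j k.
Proof. unfold Xmat. destruct (Nat.ltb_spec (l1 + j) l1); [lia|]. f_equal. lia. Qed.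

Lemma polyP_iff n l1 l2 xs xh y : polyP n l1 l2 xs xh y <-> inP n l1 l2 xs xh y.
Proof. split.
- intros [th [thh [H1 [H2 [H3 H4]]]]].
  exists (fun p => if Nat.ltb p l1 then th p else thh (p - l1)%nat). split; [|split].
  + intros p Hp. destruct (Nat.ltb_spec p l1); auto. apply H3; lia.
  + rewrite <- H2. apply rsum_ext. intros i Hi. destruct (Nat.ltb_spec i l1); auto; lia.
  + intros k Hk. rewrite H4 by auto. rewrite rsum_split. f_equal.
    * apply rsum_ext. intros i Hi. rewrite Xmat_lo by auto. destruct (Nat.ltb_spec i l1); auto; lia.
    * apply rsum_ext. intros j Hj. rewrite Xmat_hi. destruct (Nat.ltb_spec (l1 + j) l1); [lia|]. do 2 f_equal. lia.
- intros [th [H1 [H2 H3]]]. exists th, (fun j => th (l1 + j)%nat). split; [|split; [|split]].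
  + intros; apply H1; lia.
  + auto.
  + intros; apply H1; lia.
  + intros k Hk. rewrite H3 by auto. rewrite rsum_split. f_equal.
    * apply rsum_ext. intros i Hi. rewrite Xmat_lo by auto. auto.
    * apply rsum_ext. intros j Hj. rewrite Xmat_hi. auto.
Qed.

Lemma if_dir n l1 l2 xs xh A (Lt : nat -> nat -> R) :
  (forall p q, (p < l1 + l2)%nat -> (q < l1 + l2)%nat -> p <> q -> 0 <= Lt p q) ->
  (forall k q, (k < n)%nat -> (q < l1 + l2)%nat ->
        rsum (l1 + l2) (fun p => Xmat l1 xs xh k p * Lt p q)
        = rsum n (fun j => A k j * Xmat l1 xs xh j q)) ->
  (forall q, (q < l1 + l2)%nat -> rsum l1 (fun p => Lt p q) = 0) ->
  invariant_cont n A (polyP n l1 l2 xs xh).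
Proof.
intros HL1 HL2 HL3 x Hx H0 t Ht.
apply polyP_iff in H0. apply polyP_iff. destruct H0 as [th0 [Hth1 [Hth2 Hth3]]].
set (m := (l1 + l2)%nat) in *.
set (X := Xmat l1 xs xh) in *.
set (c := rsum m (fun p => Rabs (Lt p p))).
set (B := fun p q => Lt p q + c * delta p q).
set (theta := fun s p => exp (-c * s) * esol m B th0 s p).
assert (Hd : forall s p, (p < m)%nat -> derivable_pt_lim (fun s => theta s p) s (rsum m (fun r => Lt p r * theta s r))).
{ intros s p Hp. unfold theta.
  replace (rsum m (fun r => Lt p r * (exp (-c * s) * esol m B th0 s r))) with
    (-c * exp (-c * s) * esol m B th0 s p + exp (-c * s) * mat_vec m B (esol m B th0 s) p).
  apply (dmult (fun s => exp (-c * s)) (fun s => esol m B th0 s p)). apply dexp. apply esol_derive; auto.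
  unfold mat_vec. rewrite (rsum_ext m (fun r => B p r * esol m B th0 s r) (fun r => Lt p r * esol m B th0 s r + c * (delta p r * esol m B th0 s r))) by (intros; unfold B; ring).
  rewrite rsum_plus, rsum_scal, rsum_delta by auto.
  rewrite (rsum_ext m (fun r => Lt p r * (exp (-c * s) * esol m B th0 s r)) (fun r => exp (-c * s) * (Lt p r * esol m B th0 s r))) by (intros; ring).
  rewrite rsum_scal. ring. }
assert (Hnn : forall s p, 0 <= s -> (p < m)%nat -> 0 <= theta s p).
{ intros s p Hs Hp. unfold theta. apply Rmult_le_pos. left; apply exp_pos.
  unfold esol. apply rsum_nonneg. intros q Hq. apply Rmult_le_pos; auto.
  apply Eexp_nonneg; auto. intros i j Hi Hj. unfold B, delta. destruct (Nat.eqb_spec i j).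
  subst. assert (Rabs (Lt j j) <= c) by (apply (rsum_term m (fun p => Rabs (Lt p p))); auto; intros; apply Rabs_pos).
  assert (- Lt j j <= Rabs (Lt j j)) by (rewrite <- Rabs_Ropp; apply Rle_abs). lra.
  rewrite Rmult_0_r, Rplus_0_r. apply HL1; auto. }
assert (Hsig : rsum l1 (fun p => theta t p) = 1).
{ set (sig := fun s => rsum l1 (fun p => theta s p)).
  assert (Hs : forall s, derivable_pt_lim sig s 0).
  { intros s. replace 0 with (rsum l1 (fun p => rsum m (fun r => Lt p r * theta s r))).
    apply derive_rsum. intros p Hp. apply Hd. unfold m; lia.
    rewrite rsum_swap. apply rsum_zero. intros r Hr.
    rewrite (rsum_ext _ _ (fun p => theta s r * Lt p r)) by (intros; ring). rewrite rsum_scal, HL3; auto; ring. }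
  assert (E0 : sig 0 = 1). { unfold sig, theta. rewrite <- Hth2. apply rsum_ext. intros p Hp.
     rewrite esol_0 by (unfold m; lia). rewrite Rmult_0_r, exp_0. ring. }
  assert (sig t <= sig 0) by (apply (nonincr sig (fun _ => 0)); auto; intros; lra).
  assert (- sig t <= - sig 0).
  { apply (nonincr (fun s => - sig s) (fun _ => -0)); auto; try (intros; lra).
    intros s. apply derivable_pt_lim_opp. auto. }
  change (sig t = 1). lra. }
set (z := fun s k => rsum m (fun p => theta s p * X k p)).
assert (Hz : is_solution n A z).
{ intros s k Hk. unfold z.
  replace (mat_vec n A (fun k => rsum m (fun p => theta s p * X k p)) k)
    with (rsum m (fun p => rsum m (fun r => Lt p r * theta s r) * X k p)).
  apply derive_rsum. intros p Hp. apply (derivable_pt_lim_scal_right (fun s => theta s p)). apply Hd; auto.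
  rewrite (rsum_ext m _ (fun p => rsum m (fun r => X k p * Lt p r * theta s r))).
  2: { intros p Hp. rewrite Rmult_comm, <- rsum_scal. apply rsum_ext; intros; ring. }
  rewrite rsum_swap.
  rewrite (rsum_ext m _ (fun r => rsum n (fun j => A k j * X j r * theta s r))).
  2: { intros r Hr. rewrite (rsum_ext m (fun p => X k p * Lt p r * theta s r) (fun p => theta s r * (X k p * Lt p r))) by (intros; ring).
       rewrite rsum_scal. unfold X. rewrite HL2 by auto. rewrite <- rsum_scal. apply rsum_ext; intros; unfold X; ring. }
  rewrite rsum_swap. unfold mat_vec. apply rsum_ext. intros j Hj. rewrite <- rsum_scal. apply rsum_ext; intros; ring. }
assert (Heq : forall k, (k < n)%nat -> x t k = z t k).
{ intros k Hk. apply (uniq_sol n A x z Hx Hz); auto. intros k0 Hk0. rewrite Hth3 by auto. unfold z. apply rsum_ext.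
  intros p Hp. unfold theta. rewrite esol_0 by auto. rewrite Rmult_0_r, exp_0. ring. }
exists (fun p => theta t p). split; [|split].
- intros; apply Hnn; auto.
- auto.
- intros k Hk. rewrite Heq by auto. reflexivity.
Qed.


Lemma fin_choice m (P : nat -> (nat -> R) -> Prop) :
  (forall q, (q < m)%nat -> exists mu, P q mu) -> exists M : nat -> nat -> R, forall q, (q < m)%nat -> P q (M q).
Proof. induction m; intros H. exists (fun _ _ => 0). intros; lia.
 destruct IHm as [M HM]. intros; apply H; lia. destruct (H m ltac:(lia)) as [mu Hmu].
 exists (fun q => if Nat.eqb q m then mu else M q). intros q Hq. destruct (Nat.eqb_spec q m). subst; auto. apply HM; lia. Qed.

Lemma dot_gen n w (F : nat -> R) a (u : nat -> R) c v : (forall k, F k = a * u k - c * v k) ->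
  dot n w F = a * dot n w u - c * dot n w v.
Proof. intros H. unfold dot. rewrite (rsum_ext n _ (fun k => w k * (a * u k - c * v k))) by (intros; rewrite H; auto).
 clear H. induction n; simpl; [ring| rewrite IHn; ring]. Qed.

Lemma dot_ext n w u v : (forall k, (k < n)%nat -> u k = v k) -> dot n w u = dot n w v.
Proof. intros H; unfold dot; apply rsum_ext; intros; rewrite H; auto. Qed.

Lemma dot_inP n l1 l2 xs xh w th (z : nat -> R) :
  (forall k, (k < n)%nat -> z k = rsum (l1 + l2) (fun p => th p * Xmat l1 xs xh k p)) ->
  dot n w z = rsum (l1 + l2) (fun p => th p * dot n w (fun k => Xmat l1 xs xh k p)).
Proof. intros H. unfold dot. rewrite (rsum_ext n _ (fun k => rsum (l1 + l2) (fun p => w k * (th p * Xmat l1 xs xh k p)))).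
 rewrite rsum_swap. apply rsum_ext. intros p Hp. rewrite <- rsum_scal. apply rsum_ext; intros; ring.
 intros k Hk. rewrite H by auto. rewrite rsum_scal. auto. Qed.

Lemma esol_is_sol n A y : is_solution n A (esol n A y).
Proof. intros t k Hk. apply esol_derive; auto. Qed.

Lemma inv_esol n l1 l2 xs xh A : invariant_cont n A (polyP n l1 l2 xs xh) ->
  forall y, inP n l1 l2 xs xh y -> forall t, 0 <= t -> inP n l1 l2 xs xh (esol n A y t).
Proof. intros Hinv y Hy t Ht. apply polyP_iff. apply (Hinv (esol n A y)); auto. apply esol_is_sol.
 apply polyP_iff. destruct Hy as [th [H1 [H2 H3]]]. exists th; split; [|split]; auto.
 intros k Hk. rewrite esol_0 by auto. auto. Qed.

Lemma dot_esol_derive n A w y : derivable_pt_lim (fun s => dot n w (esol n A y s)) 0 (dot n w (mat_vec n A y)).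
Proof. unfold dot. replace (rsum n (fun k => w k * mat_vec n A y k)) with (rsum n (fun k => w k * mat_vec n A (esol n A y 0) k)).
 apply (derive_rsum n (fun k s => w k * esol n A y s k)). intros k Hk. apply dconst_mult. apply esol_derive; auto.
 apply rsum_ext. intros k Hk. f_equal. unfold mat_vec. apply rsum_ext. intros j Hj. rewrite esol_0; auto. Qed.

Lemma esol_lin n A y v sg t k : esol n A (fun j => y j + sg * v j) t k = esol n A y t k + sg * esol n A v t k.
Proof. unfold esol. rewrite <- rsum_scal, <- rsum_plus. apply rsum_ext; intros; ring. Qed.

Lemma dot_bound n l1 l2 xs xh w (z : nat -> R) (bd : nat -> R) :
  inP n l1 l2 xs xh z -> (forall p, (p < l1 + l2)%nat -> dot n w (fun k => Xmat l1 xs xh k p) <= bd p) ->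
  exists th, (forall p, (p < l1 + l2)%nat -> 0 <= th p) /\ rsum l1 th = 1 /\
    dot n w z <= rsum (l1 + l2) (fun p => th p * bd p).
Proof. intros [th [H1 [H2 H3]]] Hb. exists th. split; [|split]; auto.
 rewrite (dot_inP n l1 l2 xs xh w th z H3). apply rsum_le. intros p Hp. apply Rmult_le_compat_l; auto. Qed.

Definition indb (b : bool) : R := if b then 1 else 0.

Lemma rsum_ind_l1 l1 l2 (f : nat -> R) : rsum (l1 + l2) (fun p => f p * indb (Nat.ltb p l1)) = rsum l1 f.
Proof. rewrite rsum_split. rewrite (rsum_zero l2). rewrite Rplus_0_r. apply rsum_ext. intros i Hi.
 unfold indb. destruct (Nat.ltb_spec i l1); [ring|lia].
 intros j Hj. unfold indb. destruct (Nat.ltb_spec (l1 + j) l1); [lia|ring]. Qed.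

Lemma vertex_col n l1 l2 xs xh A q : invariant_cont n A (polyP n l1 l2 xs xh) -> (q < l1)%nat ->
  incone n (l1 + l2) (fun p k => Xmat l1 xs xh k p - indb (Nat.ltb p l1) * Xmat l1 xs xh k q)
    (mat_vec n A (fun j => Xmat l1 xs xh j q)).
Proof. intros Hinv Hq. apply NNPP. intros Hn. apply farkas in Hn. destruct Hn as [w [Hw1 Hw2]].
 set (X := Xmat l1 xs xh) in *.
 set (y := fun j => X j q).
 set (dy := dot n w y).
 assert (Hy : inP n l1 l2 xs xh y).
 { exists (delta q). split; [|split].
   - intros; unfold delta; destruct (Nat.eqb q p); lra.
   - rewrite (rsum_ext l1 _ (fun p => delta q p * 1)) by (intros; ring). apply rsum_delta; auto.
   - intros k Hk. symmetry. apply (rsum_delta _ (fun p => X k p)). lia. }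
 destruct (posderiv (fun s => dot n w (esol n A y s)) _ (dot_esol_derive n A w y) Hw2) as [t [Ht Hlt]].
 assert (Hin := inv_esol n l1 l2 xs xh A Hinv y Hy t ltac:(lra)).
 destruct (dot_bound n l1 l2 xs xh w _ (fun p => indb (Nat.ltb p l1) * dy) Hin) as [th [H1 [H2 H3]]].
 { intros p Hp. specialize (Hw1 p Hp). rewrite (dot_gen n w _ 1 (fun k => X k p) (indb (Nat.ltb p l1)) y) in Hw1 by (intros; unfold y; ring).
   fold X. fold dy in Hw1. lra. }
 rewrite (rsum_ext _ _ (fun p => (th p * dy) * indb (Nat.ltb p l1))) in H3 by (intros; ring).
 rewrite rsum_ind_l1 in H3. rewrite (rsum_ext _ _ (fun p => dy * th p)) in H3 by (intros; ring). rewrite rsum_scal, H2 in H3.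
 assert (dot n w (esol n A y 0) = dy). { unfold dy. apply dot_ext. intros; apply esol_0; auto. }
 lra. Qed.

Definition gR l1 m (X : nat -> nat -> R) q p k :=
  indb (Nat.ltb p m) * indb (negb (Nat.ltb p l1)) * X k p - (1 - indb (Nat.ltb p m)) * X k q.

Lemma ray_col n l1 l2 xs xh A q : invariant_cont n A (polyP n l1 l2 xs xh) -> (1 <= l1)%nat ->
  (l1 <= q)%nat -> (q < l1 + l2)%nat ->
  incone n (S (l1 + l2)) (gR l1 (l1 + l2) (Xmat l1 xs xh) q) (mat_vec n A (fun j => Xmat l1 xs xh j q)).
Proof. intros Hinv Hl1 Hq1 Hq2. apply NNPP. intros Hn. apply farkas in Hn. destruct Hn as [w [Hw1 Hw2]].
 set (m := (l1 + l2)%nat) in *.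
 set (X := Xmat l1 xs xh) in *.
 set (d := fun p => dot n w (fun k => X k p)).
 assert (Hgd : forall p, dot n w (gR l1 m X q p) = indb (Nat.ltb p m) * indb (negb (Nat.ltb p l1)) * d p - (1 - indb (Nat.ltb p m)) * d q).
 { intros p. apply dot_gen. intros; unfold gR; auto. }
 assert (Hray : forall p, (l1 <= p)%nat -> (p < m)%nat -> d p <= 0).
 { intros p H1 H2. specialize (Hw1 p ltac:(lia)). rewrite Hgd in Hw1. unfold indb in Hw1.
   destruct (Nat.ltb_spec p m); [|lia]. destruct (Nat.ltb_spec p l1); [lia|]. simpl in Hw1. lra. }
 assert (Hdq : d q = 0).
 { specialize (Hw1 m ltac:(lia)). rewrite Hgd in Hw1. unfold indb in Hw1. rewrite Nat.ltb_irrefl in Hw1.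
   specialize (Hray q Hq1 Hq2). lra. }
 set (v := fun j => X j q).
 destruct (posderiv (fun s => dot n w (esol n A v s)) _ (dot_esol_derive n A w v) Hw2) as [t [Ht Hlt]].
 assert (Hv0 : dot n w (esol n A v 0) = 0). { transitivity (d q); auto. unfold d. apply dot_ext. intros; rewrite esol_0; auto. }
 rewrite Hv0 in Hlt.
 set (y0 := fun j => X j 0%nat).
 set (a := dot n w (esol n A y0 t)).
 set (M := rsum l1 (fun p => Rabs (d p))).
 set (hv := dot n w (esol n A v t)) in *.
 set (sg := Rmax 0 ((M - a + 1) / hv)).
 assert (Hsg0 : 0 <= sg) by apply Rmax_l.
 assert (Hsg1 : M - a + 1 <= sg * hv).
 { assert ((M - a + 1) / hv <= sg) by apply Rmax_r.
   replace (M - a + 1) with ((M - a + 1) / hv * hv) by (field; lra). apply Rmult_le_compat_r; lra. }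
 set (ys := fun j => y0 j + sg * v j).
 assert (Hys : inP n l1 l2 xs xh ys).
 { exists (fun p => delta 0 p + sg * delta q p). split; [|split].
   - intros p Hp. unfold delta. destruct (Nat.eqb 0 p), (Nat.eqb q p); nra.
   - rewrite rsum_plus, rsum_scal. rewrite (rsum_zero l1 (delta q)).
     rewrite (rsum_ext l1 _ (fun p => delta 0 p * 1)) by (intros; ring). rewrite rsum_delta by lia. ring.
     intros i Hi. unfold delta. destruct (Nat.eqb_spec q i); [lia|auto].
   - intros k Hk. rewrite (rsum_ext _ (fun p => (delta 0 p + sg * delta q p) * X k p) (fun p => delta 0 p * X k p + sg * (delta q p * X k p))) by (intros; ring).
     rewrite rsum_plus, rsum_scal. rewrite (rsum_delta _ (fun p => X k p)) by lia. rewrite (rsum_delta _ (fun p => X k p)) by lia.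
     auto. }
 assert (Hin := inv_esol n l1 l2 xs xh A Hinv ys Hys t ltac:(lra)).
 destruct (dot_bound n l1 l2 xs xh w _ (fun p => M * indb (Nat.ltb p l1)) Hin) as [th [H1 [H2 H3]]].
 { intros p Hp. fold X. change (d p <= M * indb (Nat.ltb p l1)). unfold indb. destruct (Nat.ltb_spec p l1).
   - rewrite Rmult_1_r. eapply Rle_trans. apply Rle_abs. apply (rsum_term l1 (fun p => Rabs (d p))); auto. intros; apply Rabs_pos.
   - rewrite Rmult_0_r. apply Hray; auto. }
 rewrite (rsum_ext _ _ (fun p => (th p * M) * indb (Nat.ltb p l1))) in H3 by (intros; ring).
 rewrite rsum_ind_l1 in H3. rewrite (rsum_ext _ _ (fun p => M * th p)) in H3 by (intros; ring). rewrite rsum_scal, H2 in H3.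
 assert (E : dot n w (esol n A ys t) = a + sg * hv).
 { unfold a, hv. rewrite (dot_gen n w _ 1 (esol n A y0 t) (- sg) (esol n A v t)). ring. intros k. unfold ys. rewrite esol_lin. ring. }
 lra. Qed.


Theorem theorem3p8 (n l1 l2 : nat) (xs xh : nat -> nat -> R) (A : nat -> nat -> R) :
  (1 <= l1)%nat ->
  (invariant_cont n A (polyP n l1 l2 xs xh) <->
   exists Lt : nat -> nat -> R,
     (forall p q, (p < l1 + l2)%nat -> (q < l1 + l2)%nat -> p <> q -> 0 <= Lt p q) /\
     (forall k q, (k < n)%nat -> (q < l1 + l2)%nat ->
        rsum (l1 + l2) (fun p => Xmat l1 xs xh k p * Lt p q)
        = rsum n (fun j => A k j * Xmat l1 xs xh j q)) /\
     (forall q, (q < l1 + l2)%nat -> rsum l1 (fun p => Lt p q) = 0)).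
Proof.
intros Hl1. split.
2: { intros [Lt [H1 [H2 H3]]]. apply (if_dir n l1 l2 xs xh A Lt); auto. }
intros Hinv.
set (m := (l1 + l2)%nat).
set (X := Xmat l1 xs xh).
destruct (fin_choice m (fun q mu => (q < l1)%nat -> (forall p, (p < m)%nat -> 0 <= mu p) /\
   forall k, (k < n)%nat -> mat_vec n A (fun j => X j q) k = rsum m (fun p => mu p * (X k p - indb (Nat.ltb p l1) * X k q))))
  as [MV HMV].
{ intros q Hq. destruct (classic (q < l1)%nat) as [Hq1|Hq1].
  - destruct (vertex_col n l1 l2 xs xh A q Hinv Hq1) as [mu [Hm1 Hm2]]. exists mu. intros _. split; auto.
  - exists (fun _ => 0). intros; lia. }
destruct (fin_choice m (fun q mu => (l1 <= q)%nat -> (forall p, (p < S m)%nat -> 0 <= mu p) /\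
   forall k, (k < n)%nat -> mat_vec n A (fun j => X j q) k = rsum (S m) (fun p => mu p * gR l1 m X q p k)))
  as [MR HMR].
{ intros q Hq. destruct (classic (l1 <= q)%nat) as [Hq1|Hq1].
  - destruct (ray_col n l1 l2 xs xh A q Hinv Hl1 Hq1 Hq) as [mu [Hm1 Hm2]]. exists mu. intros _. split; auto.
  - exists (fun _ => 0). intros; lia. }
exists (fun p q => if Nat.ltb q l1 then MV q p - delta q p * rsum l1 (MV q)
                   else indb (negb (Nat.ltb p l1)) * MR q p - delta q p * MR q m).
split; [|split].
- intros p q Hp Hq Hpq. assert (Hd : delta q p = 0) by (unfold delta; destruct (Nat.eqb_spec q p); [lia|auto]).
  rewrite Hd. destruct (Nat.ltb_spec q l1).
  + destruct (HMV q Hq ltac:(lia)) as [H1 _]. specialize (H1 p Hp). lra.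
  + destruct (HMR q Hq ltac:(lia)) as [H1 _]. specialize (H1 p ltac:(lia)).
    unfold indb. destruct (negb (Nat.ltb p l1)); lra.
- intros k q Hk Hq. fold m X. change (rsum n (fun j => A k j * X j q)) with (mat_vec n A (fun j => X j q) k).
  destruct (Nat.ltb_spec q l1).
  + destruct (HMV q Hq ltac:(lia)) as [_ H2]. rewrite H2 by auto.
    rewrite (rsum_ext m (fun p => X k p * (MV q p - delta q p * rsum l1 (MV q))) (fun p => MV q p * X k p + - (rsum l1 (MV q) * (delta q p * X k p)))) by (intros; ring).
    rewrite rsum_plus, rsum_opp, rsum_scal, rsum_delta by auto.
    rewrite (rsum_ext m (fun p => MV q p * (X k p - indb (Nat.ltb p l1) * X k q)) (fun p => MV q p * X k p + - (X k q * (MV q p * indb (Nat.ltb p l1))))) by (intros; ring).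
    rewrite rsum_plus, rsum_opp, rsum_scal. unfold m. rewrite rsum_ind_l1. ring.
  + destruct (HMR q Hq ltac:(lia)) as [_ H2]. rewrite H2 by auto. simpl rsum.
    unfold gR. rewrite Nat.ltb_irrefl.
    rewrite (rsum_ext m (fun p => MR q p * (indb (Nat.ltb p m) * indb (negb (Nat.ltb p l1)) * X k p - (1 - indb (Nat.ltb p m)) * X k q))
        (fun p => indb (negb (Nat.ltb p l1)) * MR q p * X k p)).
    2: { intros p Hp. unfold indb at 1 3. destruct (Nat.ltb_spec p m); [|lia]. ring. }
    rewrite (rsum_ext m (fun p => X k p * (indb (negb (Nat.ltb p l1)) * MR q p - delta q p * MR q m)) (fun p => indb (negb (Nat.ltb p l1)) * MR q p * X k p + - (MR q m * (delta q p * X k p)))) by (intros; ring).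
    rewrite rsum_plus, rsum_opp, rsum_scal, rsum_delta by auto. change (indb false) with 0. ring.
- intros q Hq. destruct (Nat.ltb_spec q l1).
  + rewrite (rsum_ext l1 _ (fun p => MV q p + - (rsum l1 (MV q) * (delta q p * 1)))) by (intros; ring).
    rewrite rsum_plus, rsum_opp, rsum_scal, rsum_delta by auto. ring.
  + apply rsum_zero. intros p Hp. unfold indb, delta. destruct (Nat.ltb_spec p l1); [|lia]. destruct (Nat.eqb_spec q p); [lia|]. simpl; ring.
Qed.
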